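(* Let $T$ be a plane labelled bipartite tree with $n$ white and $m$ black vertices, where $n+m$ is even. Then the value $i(T)\in\{0,1\}$ does not depend on which white vertex is chosen as the root vertex (nor on the root edge at it). Consequently the parity (even/odd) of $T$ is well defined.
   Context: A plane labelled bipartite tree with $n$ white and $m$ black vertices is defined as follows. It is a finite tree embedded in the oriented plane, considered up to orientation-preserving homeomorphism. Its vertices are colored white and black so that adjacent vertices have different colors. The white vertices carry the distinct labels $v_1,\dots,v_n$ and the black vertices the distinct labels $u_1,\dots,u_m$. String $c(T)$: choose a white vertex $v_i$ (the root vertex) and an edge $e$ incident to it (the root edge). Walk counterclockwise around $T$, i.e. perform the contour walk around the tree keeping the tree on the left, starting at $v_i$ and first traversing $e$, until returning to $v_i$ after all edges have been traversed twice. Whenever a vertex is met for the first time, write its label. Whenever a vertex is met for the last time, write a closing bracket '')''. For example, for the path $v_1-u_1-v_2-u_2$ rooted at $v_1$, $c(T)=v_1u_1v_2u_2))))$. The string contains $n+m$ labels and $n+m$ brackets. Invariant: let - $a$ be the number of pairs of white labels $v_k,v_l$ with $v_k$ occurring before $v_l$ in $c(T)$ and $k>l$; - $b$ be the analogous number of inversions among black labels $u_k$; - $c$ be the number of pairs (black label $u$, white label $v$) with $u$ occurring before $v$ in $c(T)$; - $d$ be the number of pairs (closing bracket, label) with the bracket occurring before the label in $c(T)$; - $e_0=|n-m|/2$. Then $i(T)\in\{0,1\}$ is defined by $i(T)\equiv a+b+c+\tfrac{d+e_0}{2}\pmod 2$. The tree is called even if $i(T)=0$ and odd if $i(T)=1$.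 *)

(* Defs.v *)
From mathcomp Require Import all_boot.
Set Implicit Arguments. Unset Strict Implicit. Unset Printing Implicit Defensive.

(* Vertices of a bipartite tree with n white vertices v_1..v_n (inl i)
   and m black vertices u_1..u_m (inr j); label indices are 0-based. *)
Definition vert (n m : nat) : finType := ('I_n + 'I_m)%type.

Definition is_white n m (x : vert n m) : bool := if x is inl _ then true else false.

(* A plane labelled bipartite tree is given by its rotation system:
   rot x = the neighbours of x listed in counterclockwise cyclic order
   (the list matters only up to cyclic rotation). *)
Definition is_plane_bip_tree n m (rot : vert n m -> seq (vert n m)) : Prop :=
  [/\ (forall x, uniq (rot x)),
      (forall x y, (y \in rot x) = (x \in rot y)),
      (forall x y, y \in rot x -> is_white x != is_white y),
      (forall x y, connect (fun a b => b \in rot a) x y)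
    & \sum_(x : vert n m) size (rot x) = 2 * (n + m).-1 ].

(* Contour walk: a dart (x, w) is the edge x -> w traversed from x to w.
   Arriving at w from x with the tree on the left, the next edge is the
   counterclockwise successor of x in the rotation at w. *)
Definition cstep n m (rot : vert n m -> seq (vert n m)) (d : vert n m * vert n m) :=
  (d.2, next (rot d.2) d.1).

(* Sequence of vertices visited by the contour walk started at root r
   with root edge r -- u, until every edge has been traversed twice. *)
Definition contour n m (rot : vert n m -> seq (vert n m)) (r u : vert n m) : seq (vert n m) :=
  r :: map snd (traject (cstep rot) (r, u) (2 * (n + m).-1)).

Inductive tok (V : Type) := Lab of V | Cl.
Arguments Cl {V}.

(* The string c(T): at each step, write the label if the vertex is met
   for the first time, then ")" if it is met for the last time. *)
Definition cstring n m (rot : vert n m -> seq (vert n m)) (r u : vert n m) : seq (tok (vert n m)) :=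
  let s := contour rot r u in
  flatten [seq (if index (nth r s k) s == k then [:: Lab (nth r s k)] else [::])
               ++ (if (size s).-1 - index (nth r s k) (rev s) == k then [:: Cl] else [::])
          | k <- iota 0 (size s)].

Definition npairs V (P : tok V -> tok V -> bool) (s : seq (tok V)) : nat :=
  \sum_(i < size s) \sum_(j < size s | i < j) P (nth Cl s i) (nth Cl s j).

Definition white_inv n m (x y : tok (vert n m)) : bool :=
  match x, y with Lab (inl k), Lab (inl l) => l < k | _, _ => false end.
Definition black_inv n m (x y : tok (vert n m)) : bool :=
  match x, y with Lab (inr k), Lab (inr l) => l < k | _, _ => false end.
Definition black_white n m (x y : tok (vert n m)) : bool :=
  match x, y with Lab (inr _), Lab (inl _) => true | _, _ => false end.
Definition cl_lab n m (x y : tok (vert n m)) : bool :=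
  match x, y with Cl, Lab _ => true | _, _ => false end.

Definition iT n m (rot : vert n m -> seq (vert n m)) (r u : vert n m) : nat :=
  let s := cstring rot r u in
  let a := npairs (@white_inv n m) s in
  let b := npairs (@black_inv n m) s in
  let c := npairs (@black_white n m) s in
  let d := npairs (@cl_lab n m) s in
  let e0 := (if n <= m then m - n else n - m)./2 in
  (a + b + c + (d + e0)./2) %% 2.

(* Main.v *)
Require Import Defs.
From HB Require Import structures.
From mathcomp Require Import all_boot zify.
Set Implicit Arguments. Unset Strict Implicit. Unset Printing Implicit Defensive.

Section TokEq.
Variable V : eqType.
Definition tok_eqb (a b : tok V) := match a, b with
  | Lab x, Lab y => x == y | Cl, Cl => true | _, _ => false end.
Lemma tok_eqP : Equality.axiom tok_eqb.
Proof.
by case=> [x|] [y|] /=; try (by constructor); apply: (iffP eqP) => [->|[]].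
Qed.
HB.instance Definition _ := hasDecEq.Build (tok V) tok_eqP.
End TokEq.

Section Toks.
Variable V : eqType.
Implicit Types (s pre post : seq V).

Fixpoint tk pre s post : seq (tok V) :=
  if s is x :: s' then
    (if x \in pre then [::] else [:: Lab x]) ++
    (if x \in s' ++ post then [::] else [:: Cl]) ++ tk (x :: pre) s' post
  else [::].

Lemma tk_eq s pre pre' post post' :
  (forall y, y \in s -> (y \in pre) = (y \in pre')) ->
  (forall y, y \in s -> (y \in post) = (y \in post')) ->
  tk pre s post = tk pre' s post'.
Proof.
elim: s pre pre' => //= x s IH pre pre' H1 H2.
rewrite H1 ?mem_head // !mem_cat H2 ?mem_head //; congr (_ ++ (_ ++ _)).
apply: IH => y ys; first by rewrite !in_cons H1 // in_cons ys orbT.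
by rewrite H2 // in_cons ys orbT.
Qed.

Lemma tk_cat s1 s2 pre post :
  tk pre (s1 ++ s2) post = tk pre s1 (s2 ++ post) ++ tk (rev s1 ++ pre) s2 post.
Proof.
elim: s1 pre => //= x s1 IH pre.
by rewrite IH catA rev_cons cat_rcons !catA.
Qed.

Lemma tk_lab y s pre post : Lab y \in tk pre s post -> y \in s.
Proof.
elim: s pre => //= x s IH pre.
rewrite !mem_cat => /or3P[| |/IH]; last by rewrite in_cons => ->; rewrite orbT.
- by case: ifP => //; rewrite mem_seq1 => _ /eqP[->]; rewrite mem_head.
- by case: ifP.
Qed.

Definition isLab (t : tok V) := if t is Lab _ then true else false.
Definition isCl (t : tok V) := if t is Cl then true else false.

Lemma cntCl_tk s pre post :
  count isCl (tk pre s post) = count (fun x => x \notin post) (undup s).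
Proof.
elim: s pre => //= x s IH pre.
rewrite !count_cat IH mem_cat.
by case: (x \in pre); case: (boolP (x \in s)) => xs /=; case: (x \in post).
Qed.

Lemma cnt_rem (p : pred V) l x : uniq l -> x \in l ->
  count p l = p x + count (predI p (predC1 x)) l.
Proof.
move=> ul xl; rewrite ((permP (perm_to_rem xl)) p) /=.
by rewrite (rem_filter x ul) count_filter.
Qed.

Lemma cntLab_tk s pre post :
  count isLab (tk pre s post) = count (fun x => x \notin pre) (undup s).
Proof.
elim: s pre => //= x s IH pre.
rewrite !count_cat IH /=.
have E : count (fun y => y \notin x :: pre) (undup s) =
         count (predI (fun y => y \notin pre) (predC1 x)) (undup s).
  by apply: eq_count => y; rewrite /= in_cons negb_or andbC.
have -> : count isLab (if x \in s ++ post then [::] else [:: Cl]) = 0 by case: ifP.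
case: (boolP (x \in s)) => xs /=.
  rewrite (@cnt_rem (fun y => y \notin pre) (undup s) x) ?undup_uniq ?mem_undup //.
  by rewrite E; case: (x \in pre).
rewrite E (@eq_in_count _ _ (fun y => y \notin pre)); last first.
  move=> y yin /=; have yx : y != x by apply/eqP => e; rewrite e mem_undup (negbTE xs) in yin.
  by rewrite yx andbT.
by case: (x \in pre).
Qed.

Lemma cnt_tk0 s : count isLab (tk [::] s [::]) = size (undup s) /\
                  count isCl (tk [::] s [::]) = size (undup s).
Proof.
by rewrite cntLab_tk cntCl_tk !(@eq_count _ _ predT) ?count_predT.
Qed.

Lemma tk_decomp (A1 B1 : seq V) (s r : V) :
  (forall y, y \in rcons A1 s -> y \in r :: B1 -> False) ->
  let P := tk [::] A1 [:: s] ++ (if s \in A1 then [::] else [:: Lab s]) in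
  let Q := (if r \in B1 then [::] else [:: Cl]) ++ tk [:: r] B1 [::] in
  [/\ tk [::] (r :: rcons A1 s ++ r :: B1) [::] = Lab r :: P ++ Cl :: Q,
      tk [::] (rcons A1 s ++ (r :: B1) ++ [:: s]) [::] = P ++ Lab r :: Q ++ [:: Cl],
      tk [::] (rcons A1 s) [::] = P ++ [:: Cl],
      tk [::] (r :: B1) [::] = Lab r :: Q
    & forall y, Lab y \in P -> y \in rcons A1 s].
Proof.
move=> dis P Q.
have rA : r \notin rcons A1 s by apply/negP => /dis; apply; rewrite mem_head.
have sB : s \notin r :: B1 by apply/negP; apply: dis; rewrite mem_rcons mem_head.
have hA : tk [::] (rcons A1 s) [::] = P ++ [:: Cl].
  by rewrite -cats1 tk_cat /= !cats0 mem_rev /P -catA.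
have hB : tk [::] (r :: B1) [::] = Lab r :: Q by rewrite /= cats0.
split => //.
- rewrite /= cats0 mem_cat mem_head orbT /= tk_cat.
  rewrite (tk_eq (pre:=[:: r]) (pre':=[::]) (post':=[::])); first last.
  + move=> y yA; rewrite cats0 in_nil; apply/negbTE/negP => yB; exact: (dis y yA yB).
  + by move=> y yA; rewrite in_nil mem_seq1; apply/negbTE; apply: contraNneq rA => <-.
  rewrite hA -catA /=; congr (_ :: _ ++ _ :: _).
  rewrite mem_cat mem_seq1 eqxx orbT /= cats0 /Q; congr (_ ++ _); apply: tk_eq => // y yB.
  have yA : (y \in rcons A1 s) = false.
    by apply/negbTE/negP => yA; apply: (dis y yA); rewrite in_cons yB orbT.
  by rewrite !in_cons mem_cat mem_rev yA mem_seq1 in_nil /= orbb orbF.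
- rewrite tk_cat (tk_eq (s:=rcons A1 s) (pre':=[::]) (post':=[:: s])) //; last first.
    move=> y yA; rewrite !mem_cat mem_seq1 in_nil orbF; case: (boolP (y \in r :: B1)) => //.
    by move=> yB; case: (dis y yA yB).
  rewrite -cats1 tk_cat /= !cats0 mem_rev mem_seq1 eqxx cats0 cats1 mem_rev (negbTE rA).
  have rs : r != s by apply: contraNneq rA => ->; rewrite mem_rcons mem_head.
  rewrite mem_cat mem_seq1 (negbTE rs) orbF tk_cat /= mem_cat in_cons !mem_rev mem_rcons mem_head !orbT /=.
  rewrite (tk_eq (s:=A1) (post:=[:: s; s]) (pre':=[::]) (post':=[:: s])) //; last first.
    by move=> y _; rewrite !in_cons orbA orbb.
  rewrite (tk_eq (s:=B1) (pre':=[:: r]) (post':=[::])) //; first last.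
  + move=> y yB; rewrite mem_seq1 in_nil; apply/negbTE; apply: contraNneq sB => <-.
    by rewrite in_cons yB orbT.
  + move=> y yB; rewrite !in_cons mem_rev.
    have -> // : (y \in rcons A1 s) = false.
    by apply/negbTE/negP => yA; apply: (dis y yA); rewrite in_cons yB orbT.
  by rewrite /P /Q -!catA /=.
- move=> y; rewrite mem_cat => /orP[/tk_lab yA|]; first by rewrite mem_rcons in_cons yA orbT.
  by case: ifP => // _; rewrite mem_seq1 => /eqP[->]; rewrite mem_rcons mem_head.
Qed.
End Toks.
Arguments isLab {V}.
Arguments isCl {V}.
Section Idx.
Variable V : eqType.

Lemma idx_first (x0 : V) s k : k < size s ->
  (index (nth x0 s k) s == k) = (nth x0 s k \notin take k s).
Proof.
move=> ks; set y := nth x0 s k.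
rewrite -{1}(cat_take_drop k s) (drop_nth x0 ks) -/y index_cat.
have sz : size (take k s) = k by rewrite size_take ks.
case: ifP => yin /=.
  by have := yin; rewrite -index_mem sz => /ltn_eqF ->.
by rewrite eqxx addn0 sz eqxx.
Qed.

Lemma idx_last (x0 : V) s k : k < size s ->
  ((size s).-1 - index (nth x0 s k) (rev s) == k) = (nth x0 s k \notin drop k.+1 s).
Proof.
move=> ks; set y := nth x0 s k.
have E : s = take k s ++ y :: drop k.+1 s by rewrite -(drop_nth x0 ks) cat_take_drop.
have sz : size (take k s) = k by rewrite size_take ks.
have szs : size s = k + (size (drop k.+1 s)).+1 by rewrite {1}E size_cat sz.
rewrite {2}E rev_cat rev_cons cat_rcons index_cat mem_rev size_rev /= eqxx.
case: ifP => yin /=.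
  have := yin; rewrite -mem_rev -index_mem size_rev => lt.
  by apply/negbTE/eqP; lia.
by apply/eqP; lia.
Qed.

Definition G (x0 : V) pre post s k : seq (tok V) :=
  (if nth x0 s k \in take k s ++ pre then [::] else [:: Lab (nth x0 s k)]) ++
  (if nth x0 s k \in drop k.+1 s ++ post then [::] else [:: Cl]).

Lemma tk_flat (x0 : V) s pre post :
  tk pre s post = flatten [seq G x0 pre post s k | k <- iota 0 (size s)].
Proof.
elim: s pre => //= x s IH pre.
rewrite /G /= drop0 IH -[1]/(1 + 0) iotaDl -map_comp -catA; do 2 congr (_ ++ _).
congr (flatten _); apply: eq_map => k /=; rewrite /G /=.
by rewrite add0n in_cons !mem_cat orbCA.
Qed.

End Idx.

Lemma cstring_tk n m (rot : vert n m -> seq (vert n m)) r u :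
  cstring rot r u = tk [::] (contour rot r u) [::].
Proof.
rewrite /cstring (tk_flat r); congr (flatten _); apply/eq_in_map => k.
rewrite mem_iota add0n => /andP[_ ks].
by rewrite /G idx_first // idx_last // !cats0 !if_neg.
Qed.
Section Stats.
Variable T : Type.
Implicit Types (w : T -> T -> nat) (s : seq T).
Fixpoint np w s : nat := if s is x :: s' then \sum_(y <- s') w x y + np w s' else 0.
Definition cr w s1 s2 := \sum_(x <- s1) \sum_(y <- s2) w x y.

Lemma np_cat w s1 s2 : np w (s1 ++ s2) = np w s1 + np w s2 + cr w s1 s2.
Proof.
elim: s1 => [|x s1 IH] /=; first by rewrite /cr big_nil addn0.
rewrite IH /cr big_cons big_cat /=; lia.
Qed.

Lemma cr_catl w s1 s2 s3 : cr w (s1 ++ s2) s3 = cr w s1 s3 + cr w s2 s3.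
Proof. by rewrite /cr big_cat. Qed.

Lemma cr_catr w s1 s2 s3 : cr w s1 (s2 ++ s3) = cr w s1 s2 + cr w s1 s3.
Proof. by rewrite /cr -big_split; apply: eq_bigr => x _; rewrite big_cat. Qed.

Lemma cr1l w x s : cr w [:: x] s = \sum_(y <- s) w x y.
Proof. by rewrite /cr big_seq1. Qed.

Lemma cr1r w x s : cr w s [:: x] = \sum_(y <- s) w y x.
Proof. by rewrite /cr; apply: eq_bigr => y _; rewrite big_seq1. Qed.

Lemma np_add w1 w2 s : np (fun x y => w1 x y + w2 x y) s = np w1 s + np w2 s.
Proof. elim: s => //= x s ->; rewrite big_split /=; lia. Qed.

Lemma np1 w x : np w [:: x] = 0.
Proof. by rewrite /= big_nil. Qed.
End Stats.

Lemma dsum_rec (F : nat -> nat -> nat) n :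
  \sum_(i < n.+1) \sum_(j < n.+1 | i < j) F i j =
  \sum_(j < n) F 0 j.+1 + \sum_(i < n) \sum_(j < n | i < j) F i.+1 j.+1.
Proof.
rewrite big_ord_recl; congr (_ + _).
  by rewrite big_mkcond big_ord_recl /= add0n.
apply: eq_bigr => i _.
by rewrite big_mkcond big_ord_recl /= add0n [RHS]big_mkcond.
Qed.

Lemma npairs_np V (P : tok V -> tok V -> bool) s :
  npairs P s = np (fun x y => nat_of_bool (P x y)) s.
Proof.
elim: s => [|x s IH]; first by rewrite /npairs big_ord0.
rewrite /npairs /= (dsum_rec (fun i j => P (nth Cl (x :: s) i) (nth Cl (x :: s) j))) /=.
rewrite -IH; congr (_ + _).
by rewrite (big_nth Cl) big_mkord.
Qed.
Section VStats.
Variables n m : nat.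
Notation V := (vert n m).
Notation T := (tok V).
Definition wI (x y : T) : nat := white_inv x y + black_inv x y + black_white x y.
Definition wD (x y : T) : nat := cl_lab x y.

Lemma abc_np s : npairs (@white_inv n m) s + npairs (@black_inv n m) s +
                 npairs (@black_white n m) s = np wI s.
Proof. by rewrite !npairs_np -!np_add. Qed.

Lemma wI_swap x y : x != y -> wI (Lab x) (Lab y) + wI (Lab y) (Lab x) = 1.
Proof.
rewrite /wI; case: x => [k|k]; case: y => [l|l] //= ne.
- have : (k : nat) != l by apply: contra ne => /eqP/val_inj ->.
  by case: ltngtP.
- have : (k : nat) != l by apply: contra ne => /eqP/val_inj ->.
  by case: ltngtP.
Qed.

Lemma crI_Cll s : cr wI [:: Cl] s = 0.
Proof. by rewrite cr1l big1. Qed.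
Lemma crI_Clr s : cr wI s [:: Cl] = 0.
Proof. by rewrite cr1r big1 // => -[[x|x]|] _. Qed.

Lemma sum_wI_r r P : (forall y, Lab y \in P -> y != r) ->
  cr wI [:: Lab r] P + cr wI P [:: Lab r] = count isLab P.
Proof.
rewrite cr1l cr1r -big_split.
elim: P => [|t P IH] H; first by rewrite big_nil.
rewrite big_cons /= IH; last by move=> y yP; apply: H; rewrite in_cons yP orbT.
case: t H => [y|] H /=; last by rewrite /wI; case: r {H IH} => [?|?].
by rewrite wI_swap // eq_sym H // mem_head.
Qed.

Lemma cr_wD_Cll s : cr wD [:: Cl] s = count isLab s.
Proof. by rewrite cr1l; elim: s => [|[y|] s IH]; rewrite ?big_nil ?big_cons //= IH. Qed.
Lemma cr_wD_Labl x s : cr wD [:: Lab x] s = 0.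
Proof. by rewrite cr1l big1. Qed.
Lemma cr_wD_Clr s : cr wD s [:: Cl] = 0.
Proof. by rewrite cr1r big1 // => -[[x|x]|] _. Qed.
Lemma cr_wD_Labr x s : cr wD s [:: Lab x] = count isCl s.
Proof. by rewrite cr1r; elim: s => [|[y|] s IH]; rewrite ?big_nil ?big_cons //= IH. Qed.
Lemma cr_wD P Q : cr wD P Q = count isCl P * count isLab Q.
Proof.
elim: P => [|t P IH]; first by rewrite /cr big_nil.
rewrite -cat1s cr_catl IH /=; case: t => [y|].
  by rewrite cr_wD_Labl.
by rewrite cr_wD_Cll mulSn.
Qed.

Lemma stat_step r P Q : (forall y, Lab y \in P -> y != r) ->
  (np wI (Lab r :: P ++ Cl :: Q) + np wI (P ++ Lab r :: Q ++ [:: Cl])) %% 2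
     = count isLab P %% 2 /\
  np wD (Lab r :: P ++ Cl :: Q) + count isCl P =
     np wD (P ++ Lab r :: Q ++ [:: Cl]) + count isLab Q.
Proof.
move=> H.
have -> : Lab r :: P ++ Cl :: Q = [:: Lab r] ++ P ++ [:: Cl] ++ Q by [].
have -> : P ++ Lab r :: Q ++ [:: Cl] = P ++ [:: Lab r] ++ Q ++ [:: Cl] by [].
have := sum_wI_r H.
rewrite !np_cat ?cr_catl ?cr_catr ?np1 ?crI_Cll ?crI_Clr ?cr_wD_Cll ?cr_wD_Labl
  ?cr_wD_Clr ?cr_wD_Labr ?cr_wD.
have e1 : cr wI [:: Lab r] [:: Cl] = 0 by rewrite crI_Clr.
have e2 : count isCl [:: Lab r] = 0 by [].
have e3 : count isLab [:: Cl] = 0 by [].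
have e4 : count isCl [:: Cl] = 1 by [].
rewrite ?e1 ?e2 ?e3 ?e4 => E.
split; lia.
Qed.
End VStats.

Lemma arith I I' d d' e0 h lP lQ cP :
  (I + I') %% 2 = lP %% 2 -> d + cP = d' + lQ -> cP + 1 = lP -> 1 + lP + lQ = 2 * h ->
  (I' + (d' + e0)./2) %% 2 = ((I + (d + e0)./2) %% 2 + h) %% 2.
Proof. move=> *; rewrite -!divn2; lia. Qed.
Lemma cross_edge (T : finType) (e : rel T) (X : {set T}) x y :
  x \in X -> y \notin X -> connect e x y -> exists a b, [/\ a \in X, b \notin X & e a b].
Proof.
move=> xX yX /connectP[p pth ey]; rewrite {}ey in yX.
elim: p x xX pth yX => [|z p IH] x xX /=; first by rewrite xX.
case/andP=> exz pth yX; case: (boolP (z \in X)) => zX; first exact: IH zX pth yX.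
by exists x, z.
Qed.

Lemma darts_lb (T : finType) (e : rel T) : symmetric e -> (forall x y, connect e x y) ->
  2 * #|T|.-1 <= #|[set d : T * T | e d.1 d.2]|.
Proof.
move=> sym con.
have [->|/card_gt0P[x0 _]] := posnP #|T|; first by [].
have claim : forall k, k < #|T| -> exists (X : {set T}) (Ds : {set T * T}),
  [/\ #|X| = k.+1, #|Ds| = 2 * k, Ds \subset [set d : T * T | e d.1 d.2]
    & Ds \subset setX X X].
  elim => [|k IH] lt.
    by exists [set x0], set0; rewrite cards1 cards0 !sub0set.
  have [X [Ds [cX cD sD sX]]] := IH (ltnW lt).
  have : 0 < #|~: X| by have := cardsC X; lia.
  case/card_gt0P => y; rewrite inE => yX.
  have : 0 < #|X| by rewrite cX.
  case/card_gt0P => x xX.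
  have [a [b [aX bX eab]]] := cross_edge xX yX (con x y).
  have ab : (a == b) = false by apply/negbTE; apply: contraNneq bX => <-.
  have baD : (b, a) \notin Ds.
    by apply/negP => /(subsetP sX); rewrite inE /= (negbTE bX).
  have abD : (a, b) \notin Ds.
    by apply/negP => /(subsetP sX); rewrite inE /= (negbTE bX) andbF.
  exists (b |: X), ((a, b) |: ((b, a) |: Ds)); split.
  - by rewrite cardsU1 bX cX.
  - rewrite cardsU1 cardsU1 !inE xpair_eqE ab /= (negbTE abD) baD cD /=; lia.
  - apply/subsetP => d; rewrite !in_setU1 => /orP[/eqP->|/orP[/eqP->|dD]].
    + by rewrite inE.
    + by rewrite inE /= sym.
    + exact: (subsetP sD).
  - apply/subsetP => d; rewrite !in_setU1 => /orP[/eqP->|/orP[/eqP->|dD]].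
    + by rewrite inE /= !in_setU1 eqxx aX orbT.
    + by rewrite inE /= !in_setU1 eqxx aX orbT.
    + by move: (subsetP sX d dD); rewrite !inE => /andP[-> ->]; rewrite !orbT.
have gt0 : 0 < #|T| by apply/card_gt0P; exists x0.
have lt : #|T|.-1 < #|T| by rewrite prednK.
have [X [Ds [cX cD sD sX]]] := claim _ lt.
by rewrite -cD; apply: subset_leq_card.
Qed.
Section Tree.
Variables (n m : nat) (rot : vert n m -> seq (vert n m)).
Local Notation V := (vert n m).
Local Notation f := (cstep rot).
Hypothesis tree : is_plane_bip_tree rot.

Lemma uq x : uniq (rot x). Proof. by case: tree. Qed.
Lemma symr x y : (y \in rot x) = (x \in rot y). Proof. by case: tree. Qed.
Lemma colr x y : y \in rot x -> is_white x != is_white y. Proof. by case: tree => _ _ H _ _; apply: H. Qed.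
Lemma conn x y : connect (fun a b => b \in rot a) x y. Proof. by case: tree. Qed.
Lemma sumr : \sum_(x : V) size (rot x) = 2 * (n + m).-1. Proof. by case: tree. Qed.

Definition D := [set d : V * V | d.2 \in rot d.1].

Lemma card_V : #|V| = n + m.
Proof. by rewrite card_sum !card_ord. Qed.

Lemma card_D : #|D| = 2 * (n + m).-1.
Proof.
rewrite -sumr -sum1_card.
rewrite (eq_bigl (fun p : V * V => xpredT p.1 && (p.2 \in rot p.1))) => [|d]; last by rewrite inE.
rewrite -(pair_big_dep xpredT (fun i j => j \in rot i) (fun _ _ => 1)) /=.
apply: eq_bigr => x _; rewrite sum1_card; exact/card_uniqP/uq.
Qed.

Lemma f_inj : injective f.
Proof.
move=> [x y] [x' y']; rewrite /cstep /= => -[ey]; rewrite -{}ey {y'} => E.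
by congr (_, _); apply: (can_inj (prev_next (uq y))).
Qed.

Definition eR x y := fun a b => (b \in rot a) &&
  ~~ (((a == x) && (b == y)) || ((a == y) && (b == x))).

Lemma eR_sym x y : symmetric (eR x y).
Proof.
move=> a b; rewrite /eR symr; congr (_ && ~~ _).
by rewrite orbC (andbC (b == y)) (andbC (b == x)).
Qed.

Lemma neq_dart x y : y \in rot x -> x != y.
Proof. by move/colr; apply: contraNneq => ->. Qed.

Lemma bridge x y : y \in rot x -> ~~ connect (eR x y) y x.
Proof.
move=> yx; apply/negP => cyx.
have csym := sym_connect_sym (eR_sym x y).
have conR : forall a b, connect (eR x y) a b.
  move=> a b; apply: (connect_sub _ (conn a b)) => c d cd.
  case: (boolP (((c == x) && (d == y)) || ((c == y) && (d == x)))).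
    by case/orP => /andP[/eqP-> /eqP->] //; rewrite csym.
  by move=> H; apply: connect1; rewrite /eR cd H.
have := darts_lb (eR_sym x y) conR.
have sub : [set d : V * V | eR x y d.1 d.2] \subset D :\ (x, y) :\ (y, x).
  apply/subsetP => -[a b]; rewrite !inE /eR /= !xpair_eqE => /andP[ab].
  rewrite negb_or => /andP[H1 H2]; rewrite ab andbT.
  by rewrite negb_and (negb_and (a == x)) -!negb_and H1 H2.
have := subset_leq_card sub.
have xy := neq_dart yx.
have inD1 : (x, y) \in D by rewrite inE.
have inD2 : (y, x) \in D :\ (x, y) by rewrite !inE xpair_eqE eq_sym (negbTE xy) /= -symr.
have := cardsD1 (x, y) D; have := cardsD1 (y, x) (D :\ (x, y)).
rewrite inD1 inD2 card_D card_V; lia.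
Qed.

Lemma f_D d : d \in D -> f d \in D.
Proof. by case: d => x y; rewrite !inE /= mem_next -symr. Qed.

Lemma iter_D k d : d \in D -> iter k f d \in D.
Proof. by move=> dD; elim: k => //= k IH; apply: f_D. Qed.

Lemma rev_orbit x y : y \in rot x -> fconnect f (x, y) (y, x).
Proof.
move=> yx; apply/negPn/negP => nc.
have xS := bridge yx.
have step : forall k, 0 < k -> connect (eR x y) y (iter k f (x, y)).1.
  elim => // -[_ _|k IH _]; first exact: connect0.
  have {IH} IH := IH isT.
  set dk := iter k.+1 f (x, y) in IH *.
  have dD : dk \in D by apply: iter_D; rewrite inE.
  have n1 : dk != (y, x).
    by apply: contraNneq nc => <-; apply: fconnect_iter.
  have n2 : dk != (x, y) by apply: contraNneq xS => edk; rewrite edk in IH.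
  rewrite iterS -/dk; case: dk dD n1 n2 IH => a b; rewrite inE /= => ba n1 n2 IH.
  apply: connect_trans IH (connect1 _); rewrite /eR ba negb_or.
  by rewrite -!xpair_eqE n1 n2.
have := step (order f (x, y)) (order_gt0 _ _); rewrite (iter_order f_inj) /=.
by rewrite (negbTE xS).
Qed.

Lemma next_orbit d x v : fconnect f d (x, v) -> v \in rot x ->
  fconnect f d (x, next (rot x) v).
Proof.
move=> dxv vx; have := rev_orbit vx => /(connect_trans dxv) dvx.
by apply: (connect_trans dvx); apply: fconnect1.
Qed.

Lemma all_rot d x v : fconnect f d (x, v) -> v \in rot x ->
  forall z, z \in rot x -> fconnect f d (x, z).
Proof.
move=> dxv vx z zx.
have cyc := cycle_next (uq x).
have := fconnect_cycle cyc vx z; rewrite zx => /iter_findex <-.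
elim: (findex _ v z) => // k IH /=.
apply: next_orbit => //; elim: k {IH} => //= k IH; by rewrite mem_next.
Qed.

Lemma all_darts d : d \in D -> forall z, z \in D -> fconnect f d z.
Proof.
move=> dD.
have good : forall a, connect (fun a b => b \in rot a) d.1 a ->
    forall c, c \in rot a -> fconnect f d (a, c).
  move=> a /connectP[p pth ->] {a}.
  have good0 : forall c, c \in rot d.1 -> fconnect f d (d.1, c).
    by case: d dD pth => a b; rewrite inE /= => ba _; apply: all_rot (connect0 _ _) ba.
  elim: p d.1 pth good0 => //= b p IH a /andP[ba pth] ga.
  apply: IH => // c cb; apply: (all_rot (d := d) (x := b) (v := a) _ _ cb).
    by apply: connect_trans (ga b ba) (rev_orbit ba).
  by rewrite -symr.
by case=> a c; rewrite inE /= => ca; apply: good => //; apply: conn.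
Qed.

Lemma order_D d : d \in D -> order f d = 2 * (n + m).-1.
Proof.
move=> dD; rewrite /order -card_D; apply: eq_card => z.
apply/idP/idP => [|zD]; last exact: all_darts.
by move/iter_findex <-; apply: iter_D.
Qed.

End Tree.

Section Step.
Variables (n m : nat) (rot : vert n m -> seq (vert n m)).
Local Notation V := (vert n m).
Local Notation f := (cstep rot).
Hypothesis tree : is_plane_bip_tree rot.

Lemma snd_traject d k :
  map snd (traject f d k) = map (fun i => (iter i f d).1) (iota 1 k).
Proof.
elim: k d => //= k IH d; congr (_ :: _).
rewrite IH -[2]/(1 + 1) iotaDl -map_comp; apply: eq_map => i /=.
by rewrite add0n -iterSr iterS.
Qed.

Lemma contour_eq d :
  contour rot d.1 d.2 = map (fun i => (iter i f d).1) (iota 0 (2 * (n + m).-1).+1).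
Proof. by case: d => x y; rewrite /contour snd_traject. Qed.

Lemma iT_np r u : iT rot r u =
  (np (@wI n m) (cstring rot r u) +
   (np (@wD n m) (cstring rot r u) + (if n <= m then m - n else n - m)./2)./2) %% 2.
Proof. by rewrite /iT abc_np npairs_np. Qed.

Lemma iT_lt r u : iT rot r u < 2.
Proof. by rewrite /iT ltn_pmod. Qed.

Lemma has_nb r s : s \in rot r -> forall v, exists w, w \in rot v.
Proof.
move=> sr v; have := conn tree r v; case/connectP => p pth ev.
case/lastP: p pth ev => [|p w] pth ev; first by exists s; rewrite ev.
rewrite last_rcons in ev; rewrite {}ev {v}.
rewrite rcons_path in pth; case/andP: pth => _ H.
by exists (last r p); rewrite -symr.
Qed.

Lemma step_iT d : d \in D rot -> ~~ odd (n + m) ->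
  iT rot (f d).1 (f d).2 = (iT rot d.1 d.2 + (n + m)./2) %% 2.
Proof.
case: d => r s; rewrite inE /= => sr ev.
set E2 := 2 * (n + m).-1.
have dD : (r, s) \in D rot by rewrite inE.
have ord : order f (r, s) = E2 := order_D tree dD.
have per : iter E2 f (r, s) = (r, s) by rewrite -ord (iter_order (f_inj tree)).
set x := fun k => (iter k f (r, s)).1.
have xS k : x k.+1 = (iter k f (r, s)).2 by rewrite /x iterS.
have eL : contour rot r s = map x (iota 0 E2.+1) by apply: (contour_eq (r, s)).
have eL' : contour rot (f (r, s)).1 (f (r, s)).2 = map x (iota 1 E2.+1).
  rewrite (contour_eq (f (r, s))) -[1]/(1 + 0) iotaDl -map_comp; apply: eq_map => i /=.
  by rewrite /x add1n iterSr.
have rs := neq_dart tree sr.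
have fc := rev_orbit tree sr.
set j := findex f (r, s) (s, r).
have ej : iter j f (r, s) = (s, r) := iter_findex fc.
have jlt : j < E2 by rewrite -ord; apply: findex_max.
have j0 : 0 < j by rewrite lt0n /j findex_eq0 xpair_eqE (negbTE rs).
have nd : forall k, 0 < k < E2 -> iter k f (r, s) != (r, s).
  move=> k /andP[k0 kE]; apply/eqP => ek.
  have := @findex_iter _ f (r, s) k; rewrite ord => /(_ kE); rewrite ek findex0 => e0.
  by rewrite -e0 in k0.
have bf : forall k, k < j -> iter k f (r, s) != (s, r).
  move=> k kj; apply/eqP => e.
  have := @findex_iter _ f (r, s) k; rewrite ord => /(_ (ltn_trans kj jlt)).
  by rewrite e -/j => ejk; rewrite ejk ltnn in kj.
set S := connect (eR rot r s) s.
have SeR a b : S a -> eR rot r s a b -> S b.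
  by move=> Sa ab; apply: connect_trans Sa (connect1 ab).
have Ss : S s by apply: connect0.
have hA : forall k, 0 < k <= j -> S (x k).
  elim => // k IH /andP[_ kj]; case: k IH kj => [|k] IH kj; first by [].
  have Sk := IH (ltnW kj).
  have dkD : iter k.+1 f (r, s) \in D rot by apply: iter_D.
  have n1 : iter k.+1 f (r, s) != (s, r) by apply: bf.
  have n2 : iter k.+1 f (r, s) != (r, s) by apply: nd; apply/andP; split => //; lia.
  rewrite xS; move: Sk dkD n1 n2; rewrite /x.
  case: (iter k.+1 f (r, s)) => a b /= Sa; rewrite inE /= => ba n1 n2.
  by apply: (SeR a b Sa); rewrite /eR ba negb_or -!xpair_eqE n1 n2.
have hB : forall k, j < k <= E2 -> ~~ S (x k).
  elim => // k IH /andP[jk kE].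
  have ek : x k.+1 = (iter k f (r, s)).2 := xS k.
  have dkD : iter k f (r, s) \in D rot by apply: iter_D.
  have [jk'|ejk] : j < k \/ k = j by lia.
    2: by rewrite ek ejk ej /=; apply: bridge.
  have nSk : ~~ S (x k) by apply: IH; rewrite jk' ltnW.
  have n2 : iter k f (r, s) != (r, s) by apply: nd; rewrite kE (leq_ltn_trans _ jk').
  rewrite ek; move: nSk dkD n2; rewrite /x.
  case: (iter k f (r, s)) => a b /= nSa; rewrite inE /= => ba n2.
  have n1 : (a, b) != (s, r) by apply: contraNneq nSa => -[->].
  apply: contra nSa => Sb.
  by apply: (SeR b a Sb); rewrite (eR_sym tree) /eR ba negb_or -!xpair_eqE n1 n2.
set A1 := map x (iota 1 j.-1).
set B1 := map x (iota j.+2 (E2 - j).-1).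
have xj : x j = s by rewrite /x ej.
have x0 : x 0 = r by [].
have eA : map x (iota 1 j) = rcons A1 s.
  have ej1 : j = j.-1 + 1 by lia.
  by rewrite {1}ej1 iotaD map_cat /= add1n prednK // xj cats1.
have eB : map x (iota j.+1 (E2 - j)) = r :: B1.
  by rewrite -(prednK (_ : 0 < E2 - j)) ?subn_gt0 //= xS ej.
have eL2 : map x (iota 0 E2.+1) = r :: map x (iota 1 j) ++ map x (iota j.+1 (E2 - j)).
  by rewrite /= -map_cat -iotaD subnKC // ltnW.
have eL2' : map x (iota 1 E2.+1) = map x (iota 1 j) ++ map x (iota j.+1 (E2 - j)) ++ [:: s].
  have eE : E2.+1 = E2 + 1 by lia.
  have eE2 : E2 = j + (E2 - j) by lia.
  rewrite eE iotaD map_cat {1}eE2 iotaD map_cat -catA /= add1n xS per.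
  by [].
have dis : forall y, y \in rcons A1 s -> y \in r :: B1 -> False.
  move=> y; rewrite -eA -eB => /mapP[i1 kin ey] /mapP[i2 kin' e].
  rewrite mem_iota in kin; rewrite mem_iota in kin'.
  have H1 := hA i1; have H2 := hB i2.
  have : ~~ S (x i2) by apply: H2; lia.
  by rewrite -e ey H1 //; lia.
have [tL tL' tA tB labP] := tk_decomp dis.
set P := tk [::] A1 [:: s] ++ (if s \in A1 then [::] else [:: Lab s]) in tL tL' tA tB labP.
set Q := (if r \in B1 then [::] else [:: Cl]) ++ tk [:: r] B1 [::] in tL tL' tA tB labP.
clearbody P Q.
have eL'' : contour rot s (next (rot s) r) = map x (iota 1 E2.+1) := eL'.
rewrite !iT_np !cstring_tk eL eL'' eL2 eL2' eA eB tL tL'.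
have labr : forall y, Lab y \in P -> y != r.
  by move=> y /labP yA; apply/eqP => eyr; apply: (dis y yA); rewrite eyr mem_head.
have [parI dRel] := @stat_step n m r P Q labr.
have [a1 a2] := cnt_tk0 (rcons A1 s); rewrite tA !count_cat /= in a1 a2.
have vis : forall v, v \in r :: rcons A1 s ++ r :: B1.
  move=> v; rewrite -eA -eB -eL2.
  have [w wv] := has_nb sr v.
  have vwD : (v, w) \in D rot by rewrite inE.
  have c := all_darts tree dD vwD.
  have ek := iter_findex c; have kl := findex_max c; rewrite ord in kl.
  apply/mapP; exists (findex f (r, s) (v, w)); first by rewrite mem_iota; lia.
  by rewrite /x ek.
have sz : size (undup (r :: rcons A1 s ++ r :: B1)) = n + m.
  have e1 : #|undup (r :: rcons A1 s ++ r :: B1)| = size (undup (r :: rcons A1 s ++ r :: B1)).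
    by apply/card_uniqP; apply: undup_uniq.
  rewrite -e1 -card_V cardT; apply: eq_cardT => v; rewrite mem_undup vis.
  by [].
have [l1 _] := cnt_tk0 (r :: rcons A1 s ++ r :: B1); rewrite tL sz /= count_cat /= in l1.
have hh : n + m = 2 * (n + m)./2.
  by rewrite -[in LHS](odd_double_half (n + m)) (negbTE ev) add0n -muln2 mulnC.
have a3 := etrans a2 (esym a1); rewrite !addn0 in a3.
have l2 := etrans l1 hh; rewrite add0n addnA in l2.
apply: (@arith _ _ _ _ _ _ (count isLab P) (count isLab Q) (count isCl P)).
- exact: parI.
- exact: dRel.
- exact: a3.
- exact: l2.
Qed.
End Step.

Lemma iter_iT n m (rot : vert n m -> seq (vert n m)) (tree : is_plane_bip_tree rot) k d :
  d \in D rot -> ~~ odd (n + m) ->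
  iT rot (iter k (cstep rot) d).1 (iter k (cstep rot) d).2 =
  (iT rot d.1 d.2 + k * (n + m)./2) %% 2.
Proof.
move=> dD ev; elim: k => [|k IH].
  by rewrite mul0n addn0 modn_small // iT_lt.
rewrite iterS (step_iT tree) ?iter_D // IH.
by rewrite modnDml mulSn; congr (_ %% 2); lia.
Qed.

Lemma iter_col n m (rot : vert n m -> seq (vert n m)) (tree : is_plane_bip_tree rot) k d :
  d \in D rot -> is_white (iter k (cstep rot) d).1 = (is_white d.1 == ~~ odd k).
Proof.
move=> dD; elim: k => [|k IH] /=; first by case: (is_white d.1).
have := iter_D tree k dD; rewrite inE => /(colr tree).
rewrite IH; case: (is_white (iter k (cstep rot) d).2); case: (odd k);
  by case: (is_white d.1).
Qed.

Theorem mainTheorem3 (n m : nat) (rot : vert n m -> seq (vert n m)) :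
  is_plane_bip_tree rot -> ~~ odd (n + m) ->
  forall (i j : 'I_n) (u u' : vert n m),
    u \in rot (inl i) -> u' \in rot (inl j) ->
    iT rot (inl i) u = iT rot (inl j) u'.
Proof.
move=> tree ev i j u u' ui uj.
have d0D : (inl i, u) \in D rot by rewrite inE.
have d1D : (inl j, u') \in D rot by rewrite inE.
have c := all_darts tree d0D d1D.
have et := iter_findex c.
have := iter_iT tree (findex (cstep rot) (inl i, u) (inl j, u')) d0D ev.
have := iter_col tree (findex (cstep rot) (inl i, u) (inl j, u')) d0D.
rewrite et /=; set t := findex _ _ _ => col ->.
have lt := iT_lt rot (inl i) u.
have ht : t = 2 * t./2.
  by rewrite -[in LHS](odd_double_half t); move: col; case: (odd t) => //= _; rewrite -muln2 mulnC.
rewrite ht -mulnA -modnDmr modnMr addn0 modn_small //.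
Qed.
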